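(* Let $N\ge3$. Take $X_j=\sigma_x$ for $j=1,\dots,N-1$, $X_j'=\sigma_x$ for $j=1,\dots,N-2$, $X_{N-1}'=\sigma_y$, and $X_N=(\sigma_x-\sigma_y)/\sqrt2$, $X_N'=(\sigma_x+\sigma_y)/\sqrt2$; let $I^N_{CHSH}=\sum_{a,b\in\{0,1\}}(-1)^{ab}\mathbb A_a\otimes\mathbb B_b$. Then $2\sqrt2$ is the largest eigenvalue of $I^N_{CHSH}$, $|G\rangle$ is an eigenvector for it, and its eigenspace has dimension exactly $2^{N-2}$, spanned by the states $\bigotimes_{k\in K}\sigma_x^{(k)}|G\rangle$ with $K\subseteq\{1,\dots,N-2\}$.
   Context: $|G\rangle=\frac{1}{\sqrt2}(|0\cdots0\rangle+|1\cdots1\rangle)$ is the $N$-qubit GHZ state; $\sigma_x,\sigma_y,\sigma_z$ are Pauli matrices and $\sigma_x^{(k)}$ denotes $\sigma_x$ acting on the $k$-th qubit. $\mathbb A_0=\bigotimes_{j=1}^{N-1}X_j$, $\mathbb A_1=\bigotimes_{j=1}^{N-1}X_j'$ act on qubits $1,\dots,N-1$, and $\mathbb B_0=X_N$, $\mathbb B_1=X_N'$ act on qubit $N$. *)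

(* Defs.v *)
From mathcomp Require Import all_boot all_order all_algebra all_field.
Set Implicit Arguments. Unset Strict Implicit. Unset Printing Implicit Defensive.
Import Order.TTheory GRing.Theory Num.Theory.
Local Open Scope ring_scope.

(* Qubits are numbered 0..N-1 (paper: 1..N); qubit 0 is the most significant
   bit of a computational basis index i < 2^N. *)
Definition qbit (N : nat) (k : 'I_N) (i : nat) : 'I_2 :=
  inord ((i %/ 2 ^ (N.-1 - k)) %% 2).

(* Kronecker product P_0 (x) P_1 (x) ... (x) P_{N-1} of 2x2 matrices. *)
Definition tens_prod (N : nat) (P : 'I_N -> 'M[algC]_2) : 'M[algC]_(2 ^ N) :=
  \matrix_(i, j) \prod_(k < N) P k (qbit k i) (qbit k j).

Definition sigma_x : 'M[algC]_2 := \matrix_(i, j) (if i == j then 0 else 1).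
Definition sigma_y : 'M[algC]_2 :=
  \matrix_(i, j) (if i == j then 0 else if (i : nat) == 0%N then - 'i else 'i).

Definition X_N : 'M[algC]_2 := (sqrtC 2)^-1 *: (sigma_x - sigma_y).
Definition X_N' : 'M[algC]_2 := (sqrtC 2)^-1 *: (sigma_x + sigma_y).

(* Factor at qubit k of A_a (x) B_b. *)
Definition party_op (N : nat) (a b : bool) (k : 'I_N) : 'M[algC]_2 :=
  if (k : nat) == N.-1 then (if b then X_N' else X_N)
  else if a && ((k : nat) == (N - 2)%N) then sigma_y else sigma_x.

Definition I_CHSH (N : nat) : 'M[algC]_(2 ^ N) :=
  \sum_(a : bool) \sum_(b : bool) (-1) ^+ (a && b) *: tens_prod (@party_op N a b).

Definition ghz (N : nat) : 'cV[algC]_(2 ^ N) :=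
  \col_i (if ((i : nat) == 0%N) || ((i : nat) == (2 ^ N).-1) then (sqrtC 2)^-1 else 0).

Definition flip_x (N : nat) (K : {set 'I_N}) : 'M[algC]_(2 ^ N) :=
  tens_prod (fun k => if k \in K then sigma_x else 1%:M).

(* Eigenspace for column eigenvectors (A v = a v): its rows are the transposes
   of the column eigenvectors of A (mathcomp's eigenspace uses row vectors). *)
Definition col_eigenspace (n : nat) (A : 'M[algC]_n) (a : algC) := eigenspace A^T a.

(* Row space spanned by the (transposed) states bigotimes_{k in K} sigma_x^{(k)} |G>,
   K ranging over subsets of qubits 1..N-2 (0-indexed: 0..N-3). *)
Definition flip_span (N : nat) :=
  (\sum_(K : {set 'I_N} | K \subset [set k : 'I_N | (k < N - 2)%N])
      <<trmx (flip_x K *m ghz N)>>)%MS.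

(* Main.v *)
Require Import Defs.
From mathcomp Require Import all_boot all_order all_algebra all_field.
From mathcomp Require Import zify ring lra.
Set Implicit Arguments. Unset Strict Implicit.
Import Order.TTheory GRing.Theory Num.Theory.
Local Open Scope nat_scope.

Definition bit (m i : nat) : nat := (i %/ 2 ^ m) %% 2.

Lemma qbitE N (k : 'I_N) i : (qbit k i : nat) = bit (N.-1 - k) i.
Proof. by rewrite /qbit inordK // ltn_pmod. Qed.

Lemma bit_le1 m i : (bit m i <= 1)%N.
Proof. by rewrite /bit -ltnS ltn_pmod. Qed.

Lemma bits_inj N i j : (i < 2 ^ N)%N -> (j < 2 ^ N)%N ->
  (forall m, (m < N)%N -> bit m i = bit m j) -> i = j.
Proof.
move=> hi hj hb.
have key : forall t, (t <= N)%N -> i %/ 2 ^ (N - t) = j %/ 2 ^ (N - t).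
  elim=> [|t IH] ht.
    by rewrite subn0 !divn_small.
  have e : N - t = (N - t.+1).+1 by lia.
  move: (IH (ltnW ht)); rewrite e expnSr !divnMA => h.
  rewrite (divn_eq (i %/ 2 ^ (N - t.+1)) 2) (divn_eq (j %/ 2 ^ (N - t.+1)) 2).
  rewrite h; congr (_ + _).
  by have := hb (N - t.+1); rewrite /bit; apply; lia.
by have := key N (leqnn N); rewrite subnn expn0 !divn1.
Qed.

Lemma bit_rev N i m : (i < 2 ^ N)%N -> (m < N)%N ->
  bit m (2 ^ N - i.+1) = 1 - bit m i.
Proof.
move=> hi hm; rewrite /bit.
set P := 2 ^ m. set E := 2 ^ (N - m).-1.
have hP : (0 < P)%N by rewrite expn_gt0.
have hN : 2 ^ N = (2 * E) * P.
  by rewrite /E /P -expnS -expnD; congr (2 ^ _); lia.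
have hq := divn_eq i P. set q := i %/ P in hq *. set r0 := i %% P in hq *.
have hr : (r0 < P)%N by rewrite ltn_pmod.
have hqE : (q < 2 * E)%N by rewrite /q ltn_divLR // -hN.
have -> : (2 ^ N - i.+1 = (2 * E - q - 1) * P + (P - 1 - r0))%N.
  rewrite hN hq. nia.
rewrite divnMDl // (divn_small (_ : P - 1 - r0 < P)%N); last lia.
rewrite addn0. lia.
Qed.

Definition D (i : nat) : bool := bit 1 i == bit 0 i.

Lemma qbit_rev N (k : 'I_N) (i : 'I_(2 ^ N)) :
  (qbit k (rev_ord i) : nat) = 1 - qbit k i.
Proof. rewrite !qbitE /=; apply: bit_rev; [exact: ltn_ord | have := ltn_ord k; lia]. Qed.

Lemma bits_inj_ord N (i j : 'I_(2 ^ N)) :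
  (forall k : 'I_N, (qbit k i : nat) = qbit k j) -> i = j.
Proof.
move=> h; apply: ord_inj. apply: (bits_inj (ltn_ord i) (ltn_ord j)) => m hm.
have hk : (N.-1 - m < N)%N by lia.
have := h (Ordinal hk); rewrite !qbitE /=.
by have -> : (N.-1 - (N.-1 - m) = m)%N by lia.
Qed.

Lemma ord2_neq (x y : 'I_2) : (x != y) = ((y : nat) == 1 - x).
Proof.
rewrite -val_eqE; case: x => [[|[|?]] ?] //; case: y => [[|[|?]] ?] //.
Qed.

Lemma diff_rev N (i j : 'I_(2 ^ N)) :
  [forall k : 'I_N, qbit k i != qbit k j] = (j == rev_ord i).
Proof.
apply/forallP/eqP => [h|->].
  apply: bits_inj_ord => k; rewrite qbit_rev; apply/eqP; by rewrite -ord2_neq.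
by move=> k; rewrite ord2_neq qbit_rev.
Qed.

Lemma D_rev N (i : 'I_(2 ^ N)) : (1 < N)%N -> D (rev_ord i) = D i.
Proof.
move=> hN; rewrite /D /= !bit_rev //; last lia.
have := bit_le1 1 i; have := bit_le1 0 i; lia.
Qed.

Lemma k1P N : (1 < N)%N -> (N.-1 < N)%N. Proof. lia. Qed.
Lemma k0P N : (1 < N)%N -> (N - 2 < N)%N. Proof. lia. Qed.
Definition kk1 N (h : (1 < N)%N) : 'I_N := Ordinal (k1P h).
Definition kk0 N (h : (1 < N)%N) : 'I_N := Ordinal (k0P h).

Lemma qbit_k1 N h i : (qbit (@kk1 N h) i : nat) = bit 0 i.
Proof. by rewrite qbitE /= subnn. Qed.
Lemma qbit_k0 N h i : (qbit (@kk0 N h) i : nat) = bit 1 i.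
Proof. rewrite qbitE /=; congr bit; lia. Qed.

Local Open Scope ring_scope.

Lemma sqrt2_sq : sqrtC 2 * sqrtC 2 = 2 :> algC.
Proof. by rewrite -expr2 sqrtCK. Qed.
Lemma sqrt2_neq0 : sqrtC 2 != 0 :> algC.
Proof. by rewrite sqrtC_eq0 pnatr_eq0. Qed.

Lemma bracket (Q : algC) (xi xj yi yj : 'I_2) :
  \sum_(a : bool) \sum_(b : bool) (-1) ^+ (a && b) *
     ((if b then X_N' else X_N) yi yj * ((if a then sigma_y else sigma_x) xi xj * Q))
  = ((xi != xj) && (yi != yj) && (xi == yi))%:R * (2 * sqrtC 2) * Q.
Proof.
have hi : 'i * 'i = -1 :> algC by rewrite -expr2 sqrCi.
have e : 2 * sqrtC 2 = (sqrtC 2)^-1 * 4 :> algC.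
  apply: (mulfI sqrt2_neq0); rewrite mulrA mulrA mulfV ?sqrt2_neq0 //.
  by rewrite mulrAC sqrt2_sq; ring.
rewrite !big_bool /= /X_N /X_N' e.
case: xi => [[|[|?]] ?] //; case: xj => [[|[|?]] ?] //;
case: yi => [[|[|?]] ?] //; case: yj => [[|[|?]] ?] //;
rewrite !mxE /= ?expr0 ?expr1; ring: hi.
Qed.

Lemma prod_bool n (b : 'I_n -> bool) :
  \prod_(k < n) (b k)%:R = [forall k, b k]%:R :> algC.
Proof.
case: (boolP [forall k, b k]) => [/forallP h|/forallPn [k hk]].
  by rewrite big1 // => k _; rewrite h.
by rewrite (bigD1 k) //= (negbTE hk) mul0r.
Qed.

Lemma tens_split N (h : (1 < N)%N) (P : 'I_N -> 'M[algC]_2) i j :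
  tens_prod P i j = P (kk1 h) (qbit (kk1 h) i) (qbit (kk1 h) j) *
    (P (kk0 h) (qbit (kk0 h) i) (qbit (kk0 h) j) *
     \prod_(k | (k != kk1 h) && (k != kk0 h)) P k (qbit k i) (qbit k j)).
Proof.
have hne : kk0 h != kk1 h by rewrite -val_eqE /=; lia.
rewrite mxE (bigD1 (kk1 h)) //= (bigD1 (kk0 h)) //=.
Qed.

Lemma party_k1 N (h : (1 < N)%N) a b : party_op a b (kk1 h) = if b then X_N' else X_N.
Proof. by rewrite /party_op /= eqxx. Qed.
Lemma party_k0 N (h : (1 < N)%N) a b : party_op a b (kk0 h) = if a then sigma_y else sigma_x.
Proof.
rewrite /party_op /=; have -> : (N - 2 == N.-1)%N = false by apply/eqP; lia.
by rewrite eqxx andbT.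
Qed.
Lemma party_rest N (h : (1 < N)%N) a b (k : 'I_N) : k != kk1 h -> k != kk0 h -> party_op a b k = sigma_x.
Proof.
rewrite /party_op -!val_eqE /= => /negbTE -> /negbTE ->; by rewrite andbF.
Qed.

Local Notation c2 := (2 * sqrtC 2 : algC).

Lemma sx_entry (x y : 'I_2) : sigma_x x y = (x != y)%:R.
Proof. by rewrite mxE; case: (x == y). Qed.

Lemma prod_rest N (h : (1 < N)%N) a b (i j : 'I_(2 ^ N)) :
  \prod_(k | (k != kk1 h) && (k != kk0 h)) party_op a b k (qbit k i) (qbit k j)
  = \prod_(k | (k != kk1 h) && (k != kk0 h)) (qbit k i != qbit k j)%:R.
Proof.
by apply: eq_bigr => k /andP[h1 h0]; rewrite party_rest // sx_entry.
Qed.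

Lemma prod_split N (h : (1 < N)%N) (F : 'I_N -> algC) :
  \prod_(k < N) F k = F (kk1 h) * (F (kk0 h) *
     \prod_(k | (k != kk1 h) && (k != kk0 h)) F k).
Proof.
have hne : kk0 h != kk1 h by rewrite -val_eqE /=; lia.
by rewrite (bigD1 (kk1 h)) //= (bigD1 (kk0 h)) //=.
Qed.

Lemma I_entry N (h : (1 < N)%N) (i j : 'I_(2 ^ N)) :
  I_CHSH N i j = ((j == rev_ord i) && D i)%:R * c2.
Proof.
rewrite /I_CHSH summxE.
under eq_bigr => a _ do rewrite summxE.
under eq_bigr => a _ do under eq_bigr => b _ do
  rewrite mxE tens_split party_k1 party_k0 prod_rest.
rewrite bracket -diff_rev.
have hD : (qbit (kk0 h) i == qbit (kk1 h) i) = D i.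
  by rewrite -val_eqE /= qbit_k0 qbit_k1.
rewrite hD; case: (D i); rewrite ?andbT ?andbF ?mul0r //.
rewrite -prod_bool (prod_split h).
case: (qbit (kk0 h) i != qbit (kk0 h) j); case: (qbit (kk1 h) i != qbit (kk1 h) j);
  rewrite /= ?mul0r ?mulr0 ?mul1r ?mulr1.
all: first [by rewrite mulrC | by rewrite [RHS]mulrC mulr0 | done].
Qed.

Lemma c2_neq0 : c2 != 0.
Proof. by rewrite mulf_neq0 ?sqrt2_neq0 // pnatr_eq0. Qed.
Lemma c2_ge0 : 0 <= c2.
Proof. by rewrite mulr_ge0 ?sqrtC_ge0 ?ler0n. Qed.

Lemma rev_eq n (i j : 'I_n) : (i == rev_ord j) = (j == rev_ord i).
Proof. by apply/eqP/eqP => ->; rewrite rev_ordK. Qed.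
Lemma rev_eq2 n (i j : 'I_n) : (rev_ord i == rev_ord j) = (i == j).
Proof. exact: (inj_eq rev_ord_inj). Qed.

Lemma rev_eqL n (i j : 'I_n) : (rev_ord i == j) = (i == rev_ord j).
Proof. by apply/eqP/eqP => [<-|->]; rewrite rev_ordK. Qed.

Lemma I_sym N (h : (1 < N)%N) : (I_CHSH N)^T = I_CHSH N.
Proof.
apply/matrixP => i j; rewrite mxE !(I_entry h) rev_eq.
case: (eqVneq j (rev_ord i)) => [->|] //=.
by rewrite D_rev.
Qed.

Lemma mulI N (h : (1 < N)%N) (v : 'rV[algC]_(2 ^ N)) :
  v *m I_CHSH N = \row_j ((D j)%:R * c2 * v 0 (rev_ord j)).
Proof.
apply/rowP => j; rewrite !mxE (bigD1 (rev_ord j)) //= big1 ?addr0.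
  by rewrite (I_entry h) rev_ordK eqxx D_rev //= mulrC.
move=> i hi; rewrite (I_entry h) -rev_eq (negbTE hi) /=.
by rewrite mul0r mulr0.
Qed.

Lemma eigP N (h : (1 < N)%N) (v : 'rV[algC]_(2 ^ N)) :
  reflect (forall j, v 0 j = (D j)%:R * v 0 (rev_ord j))
          (v <= eigenspace (I_CHSH N) c2)%MS.
Proof.
apply: (iffP eigenspaceP) => [e j | e].
  have := congr1 (fun M : 'rV_(2 ^ N) => M 0 j) e; rewrite /= (mulI h) !mxE => e'.
  apply: (mulfI c2_neq0); rewrite -e'; ring.
apply/rowP => j; rewrite (mulI h) !mxE [in RHS](e j); ring.
Qed.

Lemma ltn0pow N : (0 < 2 ^ N)%N. Proof. by rewrite expn_gt0. Qed.
Definition o0 N : 'I_(2 ^ N) := Ordinal (ltn0pow N).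

Lemma ghzE N (j : 'I_(2 ^ N)) :
  ghz N j 0 = ((j == o0 N) || (j == rev_ord (o0 N)))%:R * (sqrtC 2)^-1.
Proof.
rewrite mxE -!val_eqE /= subn1.
by case: (_ || _); rewrite ?mul1r ?mul0r.
Qed.

Lemma bit_0 m : bit m 0 = 0%N.
Proof. by rewrite /bit div0n mod0n. Qed.

Lemma D_o0 N : D (o0 N). Proof. by rewrite /D /= !bit_0. Qed.

Lemma trE n (A : 'cV[algC]_n) j : A^T 0 j = A j 0.
Proof. by rewrite mxE. Qed.

Lemma ghz_eig N (h : (1 < N)%N) : ((ghz N)^T <= eigenspace (I_CHSH N) c2)%MS.
Proof.
apply/eigP => // j; rewrite !trE !ghzE rev_eq2 rev_eqL orbC.
case: (boolP (D j)) => hD; first by rewrite mul1r.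
rewrite mul0r.
case: (eqVneq j (o0 N)) => [e|_]; first by rewrite e D_o0 in hD.
case: (eqVneq j (rev_ord (o0 N))) => [e|_]; first by rewrite e D_rev // D_o0 in hD.
by rewrite mul0r.
Qed.

Lemma ghz_neq0 N : ghz N != 0.
Proof.
apply/eqP => /matrixP /(_ (o0 N) 0); rewrite ghzE eqxx [RHS]mxE /= mul1r.
by apply/eqP; rewrite invr_eq0 sqrt2_neq0.
Qed.

Lemma part1 N (h : (1 < N)%N) : eigenvalue (I_CHSH N) c2.
Proof.
apply/eigenvalueP; exists (ghz N)^T; first exact/eigenspaceP/ghz_eig.
by apply: contra (ghz_neq0 N) => /eqP e; rewrite -[ghz N]trmxK e linear0.
Qed.

Lemma part3 N (h : (1 < N)%N) : I_CHSH N *m ghz N = c2 *: ghz N.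
Proof.
apply: trmx_inj; rewrite trmx_mul (I_sym h).
have /eigenspaceP -> := ghz_eig h.
by apply/matrixP => i j; rewrite !mxE.
Qed.

Lemma part2 N (h : (1 < N)%N) a : eigenvalue (I_CHSH N) a -> a <= c2.
Proof.
case/eigenvalueP => v e hv.
have E (j : 'I_(2 ^ N)) : (D j)%:R * c2 * v 0 (rev_ord j) = a * v 0 j.
  by have := congr1 (fun M : 'rV_(2 ^ N) => M 0 j) e; rewrite /= (mulI h) !mxE.
have [j hj] : exists j, v 0 j != 0.
  apply/existsP; apply: contraNT hv => /existsPn hn.
  by apply/eqP/rowP => j; rewrite mxE; apply/eqP; move: (hn j); rewrite negbK.
case: (boolP (D j)) => hD.
  have E2 := E (rev_ord j); rewrite D_rev // hD rev_ordK mul1r in E2.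
  have E1 := E j; rewrite hD mul1r in E1.
  have : c2 * c2 * v 0 j = a * a * v 0 j by rewrite -mulrA E2 mulrCA E1 mulrA.
  move/eqP; rewrite -subr_eq0 -mulrBl mulf_eq0 (negbTE hj) orbF.
  have -> : c2 * c2 - a * a = (c2 - a) * (c2 + a) by ring.
  rewrite mulf_eq0 subr_eq0 addr_eq0 => /orP[/eqP <- //| /eqP ha].
  rewrite -[a]opprK -ha.
  by rewrite (le_trans _ c2_ge0) // oppr_le0 c2_ge0.
have E1 := E j; rewrite (negbTE hD) !mul0r in E1.
move/esym/eqP: E1; rewrite mulf_eq0 (negbTE hj) orbF => /eqP ->.
exact: c2_ge0.
Qed.

Lemma fP N (h : (1 < N)%N) (r : 'I_(2 ^ (N - 2))) : (4 * r < 2 ^ N)%N.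
Proof.
have -> : (2 ^ N = 4 * 2 ^ (N - 2))%N by rewrite -{1}(subnKC h) expnD.
by rewrite ltn_pmul2l.
Qed.
Definition fo N (h : (1 < N)%N) (r : 'I_(2 ^ (N - 2))) : 'I_(2 ^ N) := Ordinal (fP h r).

Lemma bit_4r m r : (m <= 1)%N -> bit m (4 * r) = 0%N.
Proof.
rewrite /bit; case: m => [|[|//]] _; rewrite ?expn0 ?expn1 ?divn1; lia.
Qed.

Lemma D_fo N h r : D (@fo N h r).
Proof. by rewrite /D /= !bit_4r. Qed.

Lemma fo_eq N h r r' : (@fo N h r == fo h r') = (r == r').
Proof. rewrite -!val_eqE /=; lia. Qed.

Lemma fo_rev N h r r' : (@fo N h r == rev_ord (fo h r')) = false.
Proof.
apply/negP => /eqP e.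
have := congr1 (bit 0) (congr1 val e).
rewrite /= bit_rev // ?bit_4r //; [exact: fP | lia].
Qed.

Definition Bm N (h : (1 < N)%N) : 'M[algC]_(2 ^ (N - 2), 2 ^ N) :=
  \matrix_(r, j) ((j == fo h r)%:R + (j == rev_ord (fo h r))%:R).

Lemma B0 N h r (j : 'I_(2 ^ N)) : ~~ D j -> Bm h r j = 0.
Proof.
move=> hD; rewrite mxE.
case: (eqVneq j (fo h r)) => [e|_]; first by rewrite e D_fo in hD.
case: (eqVneq j (rev_ord (fo h r))) => [e|_]; first by rewrite e D_rev // D_fo in hD.
by rewrite addr0.
Qed.

Lemma B_eig N h r : (row r (@Bm N h) <= eigenspace (I_CHSH N) c2)%MS.
Proof.
apply/eigP => // j; rewrite !mxE.
case: (boolP (D j)) => hD.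
  by rewrite mul1r rev_eqL rev_eq2 addrC.
by rewrite mul0r; have := @B0 _ h r j hD; rewrite mxE.
Qed.

Lemma cover0 N (h : (1 < N)%N) (j : 'I_(2 ^ N)) :
  bit 0 j = 0%N -> D j -> exists r, j = fo h r.
Proof.
move=> h0 hD.
have hD' : bit 1 j = 0%N by move: hD; rewrite /D h0 => /eqP.
have hr : (j %/ 4 < 2 ^ (N - 2))%N.
  rewrite ltn_divLR // mulnC.
  by have <- : (2 ^ N = 4 * 2 ^ (N - 2))%N by rewrite -{1}(subnKC h) expnD.
exists (Ordinal hr); apply: val_inj => /=.
move: h0 hD'; rewrite /bit expn0 expn1 divn1; lia.
Qed.

Lemma cover N (h : (1 < N)%N) (j : 'I_(2 ^ N)) :
  D j -> exists r, (j = fo h r) \/ (j = rev_ord (fo h r)).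
Proof.
move=> hD.
have := bit_le1 0 j; case: (bit 0 j =P 0%N) => [h0 _|h1 hl].
  by have [r ->] := cover0 h h0 hD; exists r; left.
have h0 : bit 0 (rev_ord j) = 0%N by rewrite /= bit_rev //; lia.
have [r er] := cover0 h h0 (etrans (D_rev j h) hD).
by exists r; right; rewrite -er rev_ordK.
Qed.

Lemma E_sub_B N (h : (1 < N)%N) (v : 'rV[algC]_(2 ^ N)) :
  (v <= eigenspace (I_CHSH N) c2)%MS -> (v <= Bm h)%MS.
Proof.
move/eigP => /(_ h) hv; apply/submxP.
exists (\row_r v 0 (fo h r)); apply/rowP => j; rewrite !mxE.
case: (boolP (D j)) => hD; last first.
  rewrite (hv j) (negbTE hD) mul0r big1 // => r _.
  by rewrite (@B0 _ h r j hD) mulr0.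
have [r0 hr0] := cover h hD.
rewrite (bigD1 r0) //= big1 ?addr0.
  rewrite !mxE; case: hr0 => ->.
    by rewrite eqxx fo_rev addr0 mulr1.
  by rewrite rev_eqL fo_rev eqxx add0r mulr1 hv rev_ordK (D_rev _ h) (D_fo h r0) mul1r.
move=> r hr; rewrite mxE; case: hr0 => ->.
  by rewrite !mxE fo_eq [r0 == r]eq_sym (negbTE hr) fo_rev addr0 mulr0.
by rewrite !mxE rev_eq2 fo_eq [r0 == r]eq_sym (negbTE hr) rev_eqL fo_rev addr0 mulr0.
Qed.

Lemma rank_B N (h : (1 < N)%N) : \rank (Bm h) = (2 ^ (N - 2))%N.
Proof.
apply/eqP; rewrite eqn_leq rank_leq_row andTb.
pose C : 'M[algC]_(2 ^ N, 2 ^ (N - 2)) := \matrix_(j, r) (j == fo h r)%:R.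
have BC : Bm h *m C = 1%:M.
  apply/matrixP => r r'; rewrite !mxE (bigD1 (fo h r')) //= big1 ?addr0.
    by rewrite !mxE eqxx mulr1 fo_eq fo_rev addr0 eq_sym.
  by move=> j hj; rewrite /C [in X in _ * X]mxE (negbTE hj) mulr0.
have := mxrankM_maxl (Bm h) C.
by rewrite BC mxrank1.
Qed.

Lemma flipE N (K : {set 'I_N}) (j i : 'I_(2 ^ N)) :
  flip_x K j i = [forall k, (qbit k j == qbit k i) == (k \notin K)]%:R.
Proof.
rewrite mxE -prod_bool; apply: eq_bigr => k _.
case: (k \in K); rewrite ?sx_entry ?mxE //=.
all: by case: (qbit k j == qbit k i).
Qed.

Lemma qbit_rev_eq N (k : 'I_N) (i j : 'I_(2 ^ N)) :
  (qbit k (rev_ord i) == qbit k (rev_ord j)) = (qbit k i == qbit k j).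
Proof.
rewrite -!val_eqE /= !qbit_rev.
have := ltn_ord (qbit k i); have := ltn_ord (qbit k j).
move: (qbit k i : nat) (qbit k j : nat) => x y; lia.
Qed.

Lemma flip_rev N (K : {set 'I_N}) (j i : 'I_(2 ^ N)) :
  flip_x K (rev_ord j) (rev_ord i) = flip_x K j i.
Proof. by rewrite !flipE; under eq_forallb => k do rewrite qbit_rev_eq. Qed.

Lemma flip_rev1 N (K : {set 'I_N}) (j i : 'I_(2 ^ N)) :
  flip_x K (rev_ord j) i = flip_x K j (rev_ord i).
Proof. by rewrite -{1}(rev_ordK i) flip_rev. Qed.

Definition gen N (K : {set 'I_N}) : 'rV[algC]_(2 ^ N) := (flip_x K *m ghz N)^T.

Lemma genE N (h : (1 < N)%N) (K : {set 'I_N}) j :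
  gen K 0 j = (flip_x K j (o0 N) + flip_x K j (rev_ord (o0 N))) * (sqrtC 2)^-1.
Proof.
have hne : rev_ord (o0 N) != o0 N.
  rewrite -val_eqE /=; have := ltn0pow N; rewrite subn1.
  have : (2 <= 2 ^ N)%N by rewrite -{1}(expn1 2) leq_exp2l //; lia.
  lia.
rewrite mxE mxE (bigD1 (o0 N)) //= (bigD1 (rev_ord (o0 N))) //= big1.
  by rewrite !ghzE !eqxx orbT /= !mul1r addr0 mulrDl.
move=> i /andP[h1 h2]; rewrite ghzE (negbTE h1) (negbTE h2) /=.
by rewrite mul0r mulr0.
Qed.

Definition Sset N : {set 'I_N} := [set k : 'I_N | (k < N - 2)%N].

Lemma flip_o0_D N (h : (1 < N)%N) (K : {set 'I_N}) (j : 'I_(2 ^ N)) :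
  K \subset Sset N -> ~~ D j -> flip_x K j (o0 N) = 0.
Proof.
move=> hK hD; rewrite flipE; case: forallP => //= hf.
exfalso; move/negP: hD; apply.
have nK (k : 'I_N) : (N - 2 <= k)%N -> k \notin K.
  move=> hk; apply/negP => /(subsetP hK); rewrite inE; lia.
have q1 := hf (kk1 h); rewrite nK /= in q1; last by rewrite /=; lia.
have q0 := hf (kk0 h); rewrite nK /= in q0; last by rewrite /=; lia.
move: q1 q0; rewrite !eqb_id -!val_eqE /= qbit_k1 qbit_k0 !qbitE /= !bit_0.
by rewrite /D => /eqP -> /eqP ->.
Qed.

Lemma gen_eig N (h : (1 < N)%N) (K : {set 'I_N}) :
  K \subset Sset N -> (gen K <= eigenspace (I_CHSH N) c2)%MS.
Proof.
move=> hK; apply/eigP => // j; rewrite !(genE h).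
rewrite flip_rev1 flip_rev.
case: (boolP (D j)) => hD; first by rewrite mul1r addrC.
rewrite mul0r (flip_o0_D h hK hD) -flip_rev1 (flip_o0_D h hK) ?addr0 ?mul0r //.
by rewrite D_rev.
Qed.

Lemma qbit_o0 N (k : 'I_N) : (qbit k (o0 N) : nat) = 0%N.
Proof. by rewrite qbitE bit_0. Qed.

Definition Kr N (h : (1 < N)%N) r : {set 'I_N} :=
  [set k : 'I_N | (qbit k (fo h r) : nat) != 0%N].

Lemma Kr_sub N (h : (1 < N)%N) r : Kr h r \subset Sset N.
Proof.
apply/subsetP => k; rewrite !inE qbitE; apply: contraR; rewrite -leqNgt => hk.
rewrite bit_4r //; have := ltn_ord k; lia.
Qed.

Lemma flip_Kr N (h : (1 < N)%N) r (j : 'I_(2 ^ N)) :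
  flip_x (Kr h r) j (o0 N) = (j == fo h r)%:R.
Proof.
rewrite flipE; apply: (congr1 (fun b : bool => b%:R)); apply/forallP/eqP => [hf|->] .
  apply: bits_inj_ord => k; have := hf k.
  rewrite inE negbK -val_eqE /= qbit_o0.
  have := ltn_ord (qbit k j); have := ltn_ord (qbit k (fo h r)).
  move: (qbit k j : nat) (qbit k (fo h r) : nat) => x y; case: x y => [|[|x]] [|[|y]] //.
move=> k; rewrite inE negbK -val_eqE /= qbit_o0.
by rewrite eqxx.
Qed.

Lemma B_sub_span N (h : (1 < N)%N) : (Bm h <= flip_span N)%MS.
Proof.
apply/row_subP => r; apply: (sumsmx_sup (Kr h r)); first exact: Kr_sub.
rewrite genmxE.
have -> : row r (Bm h) = sqrtC 2 *: gen (Kr h r).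
  apply/rowP => j; rewrite [LHS]mxE [LHS]mxE [RHS]mxE (genE h) flip_Kr -flip_rev1 flip_Kr rev_eqL.
  by rewrite mulrCA mulfV ?sqrt2_neq0 // mulr1.
by apply: scalemx_sub.
Qed.

Theorem mainTheorem6 (N : nat) (hN : (3 <= N)%N) :
  [/\ eigenvalue (I_CHSH N) (2 * sqrtC 2),
      (forall a : algC, eigenvalue (I_CHSH N) a -> a <= 2 * sqrtC 2),
      ghz N != 0 /\ I_CHSH N *m ghz N = (2 * sqrtC 2) *: ghz N,
      \rank (col_eigenspace (I_CHSH N) (2 * sqrtC 2)) = (2 ^ (N - 2))%N &
      (col_eigenspace (I_CHSH N) (2 * sqrtC 2)%R ==
         flip_span N)%MS].
Proof.
have h : (1 < N)%N by apply: ltnW.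
have Ecol : col_eigenspace (I_CHSH N) (2 * sqrtC 2) = eigenspace (I_CHSH N) c2.
  by rewrite /col_eigenspace (I_sym h).
have EB : (eigenspace (I_CHSH N) c2 <= Bm h)%MS.
  by apply/row_subP => i; apply: E_sub_B; apply: row_sub.
have BE : (Bm h <= eigenspace (I_CHSH N) c2)%MS.
  by apply/row_subP => r; apply: B_eig.
have FE : (flip_span N <= eigenspace (I_CHSH N) c2)%MS.
  apply/sumsmx_subP => K hK; rewrite genmxE; exact: gen_eig.
rewrite Ecol; split.
- exact: part1.
- exact: part2.
- by split; [exact: ghz_neq0 | exact: part3].
- by rewrite -(rank_B h); apply: eqmx_rank; rewrite EB BE.
- by rewrite FE (submx_trans EB (B_sub_span h)).
Qed.
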